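(* Let $Q$ be a loop. (i) If $N(Q)$ is a normal subloop of $Q$, then $Q/N(Q)$ is an abelian group if and only if for all $x,y,z,u,v\in Q$: $[[x,y,z],u,v]=[u,[x,y,z],v]=[u,v,[x,y,z]]=1$ and $[[x,y],z,u]=[z,[x,y],u]=[z,u,[x,y]]=1$. (ii) $Q/Z(Q)$ is a group if and only if for all $x,y,z,u,v\in Q$: $[[x,y,z],u,v]=[u,[x,y,z],v]=[u,v,[x,y,z]]=1$ and $[[x,y,z],u]=1$.
   Context: A loop $(Q,\cdot)$ is a set with a binary operation and an identity $1$ such that all left translations $L_x:y\mapsto xy$ and right translations $R_x:y\mapsto yx$ are bijections; $x\backslash y=yL_x^{-1}$. The associator is $[x,y,z]=(x\cdot yz)\backslash(xy\cdot z)$ and the commutator is $[x,y]=(yx)\backslash(xy)$ (juxtaposition denotes multiplication, e.g. $x\cdot yz=x\cdot(y\cdot z)$). $\mathrm{Inn}(Q)$ is the set of elements of $\langle L_x,R_x:x\in Q\rangle$ fixing $1$; a subloop $S$ (nonempty subset closed under multiplication and both divisions) is normal if $S\varphi=S$ for all $\varphi\in\mathrm{Inn}(Q)$, and then $Q/S$ is the loop of cosets $xS$ with $xS\cdot yS=(xy)S$. The nucleus is $N(Q)=\{a\in Q: ax\cdot y=a\cdot xy,\ xy\cdot a=x\cdot ya,\ xa\cdot y=x\cdot ay\ \forall x,y\in Q\}$, the commutant is $C(Q)=\{a: ax=xa\ \forall x\}$, and the center is $Z(Q)=C(Q)\cap N(Q)$, which is always a normal subloop. *)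

(* Defs.v *)
From Stdlib Require Import ClassicalEpsilon.

Record loop := Loop {
  carrier :> Type;
  mul : carrier -> carrier -> carrier;
  ldiv : carrier -> carrier -> carrier;   (* x \ y = y L_x^{-1} *)
  rdiv : carrier -> carrier -> carrier;   (* y / x = y R_x^{-1} *)
  one : carrier;
  mul1l : forall x, mul one x = x;
  mul1r : forall x, mul x one = x;
  mul_ldiv : forall x y, mul x (ldiv x y) = y;
  ldiv_mul : forall x y, ldiv x (mul x y) = y;
  mul_rdiv : forall x y, mul (rdiv y x) x = y;
  rdiv_mul : forall x y, rdiv (mul y x) x = y
}.

Arguments mul {l}.
Arguments ldiv {l}.
Arguments rdiv {l}.
Arguments one {l}.

Section LoopDefs.
Variable Q : loop.

Definition assoc (x y z : Q) : Q := ldiv (mul x (mul y z)) (mul (mul x y) z).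
Definition comm (x y : Q) : Q := ldiv (mul y x) (mul x y).

(* Multiplication group Mlt(Q) = < L_x, R_x : x in Q > (group generated,
   hence closed under inverses L_x^{-1}, R_x^{-1}). *)
Inductive mlt : (Q -> Q) -> Prop :=
| mlt_id : mlt (fun y => y)
| mlt_L x : mlt (fun y => mul x y)
| mlt_R x : mlt (fun y => mul y x)
| mlt_Linv x : mlt (fun y => ldiv x y)
| mlt_Rinv x : mlt (fun y => rdiv y x)
| mlt_comp f g : mlt f -> mlt g -> mlt (fun y => g (f y)).

Definition inn (f : Q -> Q) : Prop := mlt f /\ f one = one.

Definition subloop (S : Q -> Prop) : Prop :=
  (exists s, S s) /\
  (forall x y, S x -> S y -> S (mul x y)) /\
  (forall x y, S x -> S y -> S (ldiv x y)) /\
  (forall x y, S x -> S y -> S (rdiv x y)).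

Definition normal (S : Q -> Prop) : Prop :=
  subloop S /\
  forall f, inn f ->
    (forall x, S x -> S (f x)) /\ (forall y, S y -> exists x, S x /\ f x = y).

Definition nucleus (a : Q) : Prop :=
  forall x y,
    mul (mul a x) y = mul a (mul x y) /\
    mul (mul x y) a = mul x (mul y a) /\
    mul (mul x a) y = mul x (mul a y).

Definition commutant (a : Q) : Prop := forall x, mul a x = mul x a.

Definition center (a : Q) : Prop := commutant a /\ nucleus a.

(* Quotient Q/S: the set of left cosets xS, with xS . yS = (xy)S
   (computed through chosen representatives). *)
Definition coset (S : Q -> Prop) (x : Q) : Q -> Prop :=
  fun y => exists s, S s /\ y = mul x s.

Definition cosets (S : Q -> Prop) : Type :=
  { A : Q -> Prop | exists x, A = coset S x }.

Definition rep (S : Q -> Prop) (A : cosets S) : Q :=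
  proj1_sig (constructive_indefinite_description _ (proj2_sig A)).

Definition qmk (S : Q -> Prop) (x : Q) : cosets S :=
  exist _ (coset S x) (ex_intro _ x eq_refl).

Definition qmul (S : Q -> Prop) (A B : cosets S) : cosets S :=
  qmk S (mul (rep S A) (rep S B)).

(* the quotient loop Q/S is a group (i.e. associative) *)
Definition quot_group (S : Q -> Prop) : Prop :=
  forall A B C : cosets S, qmul S (qmul S A B) C = qmul S A (qmul S B C).

Definition quot_abgroup (S : Q -> Prop) : Prop :=
  quot_group S /\ forall A B : cosets S, qmul S A B = qmul S B A.

End LoopDefs.

Arguments assoc {Q}.
Arguments comm {Q}.

(* Main.v *)
Require Import Defs.
From Stdlib Require Import ClassicalEpsilon FunctionalExtensionality PropExtensionality ProofIrrelevance.

Section Basic.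
Variable Q : loop.

Lemma ldiv_one_iff (p q : Q) : ldiv p q = one <-> q = p.
Proof.
  split.
  - intro H. rewrite <- (mul_ldiv Q p q), H, mul1r. reflexivity.
  - intro H. rewrite H. rewrite <- (mul1r Q p) at 2. apply ldiv_mul.
Qed.

Lemma assoc_one (x y z : Q) : assoc x y z = one <-> mul (mul x y) z = mul x (mul y z).
Proof. unfold assoc. apply ldiv_one_iff. Qed.

Lemma comm_one (x y : Q) : comm x y = one <-> mul x y = mul y x.
Proof. unfold comm. apply ldiv_one_iff. Qed.

Lemma lcancel (a x y : Q) : mul a x = mul a y -> x = y.
Proof. intro H. rewrite <- (ldiv_mul Q a x), H. apply ldiv_mul. Qed.

Lemma rcancel (a x y : Q) : mul x a = mul y a -> x = y.
Proof. intro H. rewrite <- (rdiv_mul Q a x), H. apply rdiv_mul. Qed.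

Lemma center_one : center Q one.
Proof.
  split.
  - intro x. rewrite mul1l, mul1r. reflexivity.
  - intros x y. rewrite !mul1l, !mul1r. repeat split; reflexivity.
Qed.

Lemma center_mul (a b : Q) : center Q a -> center Q b -> center Q (mul a b).
Proof.
  intros [Ca Na] [Cb Nb]. split.
  - intro x. destruct (Na b x) as [E1 _]. destruct (Na x b) as [E2 [_ E3]].
    rewrite E1, Cb, <- E2, Ca, E3. reflexivity.
  - intros x y.
    destruct (Na b x) as [A1 _]. destruct (Na (mul b x) y) as [A2 _].
    destruct (Nb x y) as [B1 _]. destruct (Na b (mul x y)) as [A3 _].
    destruct (Nb (mul x y) a) as [_ [B2 _]].
    destruct (Na x y) as [_ [A4 _]].
    destruct (Nb x (mul y a)) as [_ [B3 _]].
    destruct (Nb y a) as [_ [B4 _]].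
    destruct (Nb x a) as [_ [B5 _]].
    destruct (Nb (mul x a) y) as [_ [_ B6]].
    destruct (Na x (mul b y)) as [_ [_ A5]].
    destruct (Na b y) as [A6 _].
    repeat split.
    + rewrite A1, A2, B1, A3. reflexivity.
    + rewrite <- B2, A4, B3, B4. reflexivity.
    + rewrite <- B5, B6, A5, A6. reflexivity.
Qed.

Lemma center_inv (a : Q) : center Q a -> center Q (ldiv a one).
Proof.
  intros [Ca Na]. set (a' := ldiv a one).
  assert (Haa : mul a a' = one) by apply mul_ldiv.
  assert (Ha'a : mul a' a = one) by (rewrite <- Ca; exact Haa).
  assert (C' : forall x, mul a' x = mul x a').
  { intro x. apply (lcancel a).
    destruct (Na a' x) as [L _]. rewrite <- L, Haa, mul1l.
    destruct (Na x a') as [L2 _]. rewrite <- L2, Ca.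
    destruct (Na x a') as [_ [_ M]]. rewrite M, Haa, mul1r. reflexivity. }
  assert (N1 : forall x y, mul (mul a' x) y = mul a' (mul x y)).
  { intros x y. apply (lcancel a).
    destruct (Na (mul a' x) y) as [L _]. rewrite <- L.
    destruct (Na a' x) as [L2 _]. rewrite <- L2.
    destruct (Na a' (mul x y)) as [L3 _]. rewrite <- L3, Haa, !mul1l. reflexivity. }
  assert (N2 : forall x y, mul (mul x y) a' = mul x (mul y a')).
  { intros x y. apply (rcancel a).
    destruct (Na (mul x y) a') as [_ [R _]]. rewrite R, Ha'a, mul1r.
    destruct (Na x (mul y a')) as [_ [R2 _]]. rewrite R2.
    destruct (Na y a') as [_ [R3 _]]. rewrite R3, Ha'a, mul1r. reflexivity. }
  split.
  - exact C'.
  - intros x y. repeat split.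
    + apply N1.
    + apply N2.
    + rewrite <- (C' x), N1, (C' (mul x y)), N2, (C' y). reflexivity.
Qed.

End Basic.

Section Gen.
Variable Q : loop.
Variable S : Q -> Prop.
Hypothesis S1 : S one.
Hypothesis Smul : forall s t, S s -> S t -> S (mul s t).
Hypothesis Sinv : forall s, S s -> S (ldiv s one).
Hypothesis Snuc : forall s, S s -> nucleus Q s.
Hypothesis Sright : forall x y s, S s -> exists t, S t /\ mul (mul x s) y = mul (mul x y) t.

Definition eqv (x y : Q) := exists s, S s /\ y = mul x s.

Lemma eqv_refl x : eqv x x.
Proof. exists one. split; [exact S1| rewrite mul1r; reflexivity]. Qed.

Lemma eqv_trans x y z : eqv x y -> eqv y z -> eqv x z.
Proof.
  intros [s [Hs ->]] [t [Ht ->]]. exists (mul s t). split; [auto|].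
  destruct (Snuc s Hs x t) as [_ [_ M]]. exact M.
Qed.

Lemma eqv_sym x y : eqv x y -> eqv y x.
Proof.
  intros [s [Hs ->]]. exists (ldiv s one). split; [auto|].
  destruct (Snuc s Hs x (ldiv s one)) as [_ [_ M]]. rewrite M, mul_ldiv, mul1r. reflexivity.
Qed.

Lemma eqv_mul a a' b b' : eqv a a' -> eqv b b' -> eqv (mul a b) (mul a' b').
Proof.
  intros H1 [t [Ht ->]]. apply eqv_trans with (mul a' b).
  - destruct H1 as [s [Hs ->]]. destruct (Sright a b s Hs) as [u [Hu E]].
    exists u. split; auto.
  - exists t. split; auto. destruct (Snuc t Ht a' b) as [_ [R _]]. symmetry; exact R.
Qed.

Lemma coset_eq x y : eqv x y -> coset Q S x = coset Q S y.
Proof.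
  intro H. apply functional_extensionality. intro z.
  apply propositional_extensionality. change (eqv x z <-> eqv y z). split; intro H'.
  - exact (eqv_trans _ _ _ (eqv_sym _ _ H) H').
  - exact (eqv_trans _ _ _ H H').
Qed.

Lemma coset_inj x y : coset Q S x = coset Q S y -> eqv x y.
Proof.
  intro H. change (coset Q S x y). rewrite H. exact (eqv_refl y).
Qed.

Lemma rep_qmk x : eqv (rep Q S (qmk Q S x)) x.
Proof.
  unfold rep. destruct (constructive_indefinite_description _ _) as [r Hr]. simpl.
  simpl in Hr. apply coset_inj. symmetry; exact Hr.
Qed.

Lemma qmk_eq x y : eqv x y -> qmk Q S x = qmk Q S y.
Proof.
  intro H. unfold qmk. generalize (ex_intro (fun x0 => coset Q S x = coset Q S x0) x eq_refl).
  generalize (ex_intro (fun x0 => coset Q S y = coset Q S x0) y eq_refl).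
  rewrite (coset_eq x y H). intros e1 e2. f_equal. apply proof_irrelevance.
Qed.

Lemma qmk_inj x y : qmk Q S x = qmk Q S y -> eqv x y.
Proof. intro H. apply coset_inj. exact (f_equal (@proj1_sig _ _) H). Qed.

Lemma eqv_ldiv p q : eqv p q <-> S (ldiv p q).
Proof.
  split.
  - intros [s [Hs ->]]. rewrite ldiv_mul. exact Hs.
  - intro H. exists (ldiv p q). split; auto. rewrite mul_ldiv; reflexivity.
Qed.

Lemma quot_group_iff : quot_group Q S <-> forall x y z, S (assoc x y z).
Proof.
  split.
  - intros H x y z. unfold assoc. apply eqv_ldiv.
    specialize (H (qmk Q S x) (qmk Q S y) (qmk Q S z)). unfold qmul in H.
    apply qmk_inj in H. apply eqv_sym.
    eapply eqv_trans; [|eapply eqv_trans; [exact H|]].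
    + apply eqv_sym. apply eqv_mul; [|apply rep_qmk].
      eapply eqv_trans; [apply rep_qmk|]. apply eqv_mul; apply rep_qmk.
    + apply eqv_mul; [apply rep_qmk|].
      eapply eqv_trans; [apply rep_qmk|]. apply eqv_mul; apply rep_qmk.
  - intros H A B C. unfold qmul. apply qmk_eq.
    set (a := rep Q S A). set (b := rep Q S B). set (c := rep Q S C).
    eapply eqv_trans; [apply eqv_mul; [apply rep_qmk | apply eqv_refl]|].
    eapply eqv_trans; [| apply eqv_mul; [apply eqv_refl | apply eqv_sym; apply rep_qmk]].
    apply eqv_sym, eqv_ldiv, H.
Qed.

Lemma quot_comm_iff : (forall A B : cosets Q S, qmul Q S A B = qmul Q S B A)
  <-> forall x y, S (comm x y).
Proof.
  split.
  - intros H x y. unfold comm. apply eqv_ldiv.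
    specialize (H (qmk Q S x) (qmk Q S y)). unfold qmul in H.
    apply qmk_inj in H. apply eqv_sym.
    eapply eqv_trans; [|eapply eqv_trans; [exact H|]].
    + apply eqv_sym. apply eqv_mul; apply rep_qmk.
    + apply eqv_mul; apply rep_qmk.
  - intros H A B. unfold qmul. apply qmk_eq.
    apply eqv_sym, eqv_ldiv, H.
Qed.

End Gen.

Lemma nucleus_iff (Q : loop) (a : Q) : nucleus Q a <->
  forall u v, assoc a u v = one /\ assoc u a v = one /\ assoc u v a = one.
Proof.
  split.
  - intros H u v. destruct (H u v) as [A [B C]].
    rewrite !assoc_one. auto.
  - intros H x y. destruct (H x y) as [A [B C]]. rewrite !assoc_one in *. auto.
Qed.

Theorem lemma2 (Q : loop) :
  (normal Q (nucleus Q) ->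
     (quot_abgroup Q (nucleus Q) <->
      forall x y z u v : Q,
        assoc (assoc x y z) u v = one /\ assoc u (assoc x y z) v = one /\
        assoc u v (assoc x y z) = one /\
        assoc (comm x y) z u = one /\ assoc z (comm x y) u = one /\
        assoc z u (comm x y) = one)) /\
  (quot_group Q (center Q) <->
      forall x y z u v : Q,
        assoc (assoc x y z) u v = one /\ assoc u (assoc x y z) v = one /\
        assoc u v (assoc x y z) = one /\
        comm (assoc x y z) u = one).
Proof.
  split.
  - intros [[_ [Hm [Hl _]]] Hn].
    assert (N1 : nucleus Q one) by (apply center_one).
    assert (Hinv : forall s, nucleus Q s -> nucleus Q (ldiv s one)) by (intros; apply Hl; auto).
    assert (Hr : forall x y s, nucleus Q s -> exists t, nucleus Q t /\ mul (mul x s) y = mul (mul x y) t).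
    { intros x y s Hs.
      set (f := fun s0 : Q => ldiv (mul x y) (mul (mul x s0) y)).
      assert (If : inn Q f).
      { split.
        - exact (mlt_comp Q _ _ (mlt_comp Q _ _ (mlt_L Q x) (mlt_R Q y)) (mlt_Linv Q (mul x y))).
        - unfold f. rewrite mul1r. apply ldiv_one_iff. reflexivity. }
      destruct (Hn f If) as [Hf _]. exists (f s). split; [apply Hf; auto|].
      unfold f. rewrite mul_ldiv. reflexivity. }
    unfold quot_abgroup.
    rewrite (quot_group_iff Q _ N1 Hm Hinv (fun s H => H) Hr).
    rewrite (quot_comm_iff Q _ N1 Hm Hinv (fun s H => H) Hr).
    split.
    + intros [HA HC] x y z u v.
      pose proof (proj1 (nucleus_iff Q _) (HA x y z) u v) as [a1 [a2 a3]].
      pose proof (proj1 (nucleus_iff Q _) (HC x y) z u) as [c1 [c2 c3]].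
      repeat split; assumption.
    + intro H. split.
      * intros x y z. apply nucleus_iff. intros u v.
        destruct (H x y z u v) as [a1 [a2 [a3 _]]]. auto.
      * intros x y. apply nucleus_iff. intros u v.
        destruct (H x y u v v) as [_ [_ [_ [c1 [c2 c3]]]]]. auto.
  - assert (Hr : forall x y s, center Q s -> exists t, center Q t /\ mul (mul x s) y = mul (mul x y) t).
    { intros x y s [Cs Ns]. exists s. split; [split; auto|].
      destruct (Ns x y) as [_ [R M]]. rewrite M, Cs, R. reflexivity. }
    rewrite (quot_group_iff Q _ (center_one Q) (center_mul Q) (center_inv Q)
               (fun s H => proj2 H) Hr).
    split.
    + intros HA x y z u v.
      destruct (HA x y z) as [C N].
      pose proof (proj1 (nucleus_iff Q _) N u v) as [a1 [a2 a3]].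
      repeat split; try assumption. apply comm_one. apply C.
    + intros H x y z. split.
      * intro u. destruct (H x y z u u) as [_ [_ [_ c]]]. apply comm_one in c. exact c.
      * apply nucleus_iff. intros u v. destruct (H x y z u v) as [a1 [a2 [a3 _]]]. auto.
Qed.
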